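(* Let $\delta_1,\dots,\delta_k$ be positive real numbers and let $\tilde D_1,\dots,\tilde D_k\in M_n(\mathbb{C})$ be such that each $\tilde D_i$ is a $\delta_i$-generalized row stochastic matrix or a $\delta_i$-generalized column stochastic matrix, with $\|\tilde D_i\|_2=\delta_i$. Let $S_k(\tilde D)=\tilde D_1+\cdots+\tilde D_k$ and $\delta=\delta_1+\cdots+\delta_k$. Then $S_k(\tilde D)$ is a $\delta$-generalized doubly stochastic matrix with $\|S_k(\tilde D)\|_2=\delta$, and for every $m\in\mathbb{N}$ and every block structure $\mathbb{B}\subseteq M_n(\mathbb{C})$, $\mu_{\mathbb{B}}(S_k(\tilde D)^m)=\delta^m$.
   Context: A $\delta$-generalized row (resp. column) stochastic matrix is a square complex matrix all of whose row (resp. column) sums equal $\delta$; it is $\delta$-generalized doubly stochastic if both hold. $\|M\|_2$ denotes the spectral norm. A block structure is a set of the form $\mathbb{B}=\{\operatorname{diag}(\delta_1I_{k_1},\dots,\delta_rI_{k_r},\Delta_1,\dots,\Delta_s)\mid \delta_i\in\mathbb{C},\ \Delta_j\in M_{n_j}(\mathbb{C})\}\subseteq M_n(\mathbb{C})$ for some $r,s\in\mathbb{N}_0$ and positive integers $k_i,n_j$ with $\sum k_i+\sum n_j=n$. The structured singular value is $\mu_{\mathbb{B}}(M)=0$ if $\det(I+M\Delta)\neq0$ for all $\Delta\in\mathbb{B}$, and otherwise $\mu_{\mathbb{B}}(M)=\big(\min\{\|\Delta\|_2\mid \Delta\in\mathbb{B},\ \det(I+M\Delta)=0\}\big)^{-1}$.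 *)

(* Defs.v *)
From HB Require Import structures.
From mathcomp Require Import all_boot all_order all_algebra.
From mathcomp Require Import boolp classical_sets reals.
From mathcomp Require Import complex.
Set Implicit Arguments. Unset Strict Implicit. Unset Printing Implicit Defensive.
Import Order.TTheory GRing.Theory Num.Theory.
Local Open Scope ring_scope.
Local Open Scope classical_set_scope.
Local Open Scope complex_scope.

Section Defs.
Variable R : realType.
Local Notation C := R[i].

Definition gen_row_stoch n (d : C) (M : 'M[C]_n) : Prop :=
  forall i : 'I_n, \sum_(j < n) M i j = d.
Definition gen_col_stoch n (d : C) (M : 'M[C]_n) : Prop :=
  forall j : 'I_n, \sum_(i < n) M i j = d.
Definition gen_doubly_stoch n (d : C) (M : 'M[C]_n) : Prop :=
  gen_row_stoch d M /\ gen_col_stoch d M.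

Definition vnorm2 n (x : 'cV[C]_n) : R :=
  Num.sqrt (\sum_(i < n) (complex.Re (x i 0) ^+ 2 + complex.Im (x i 0) ^+ 2)).

Definition specnorm n (M : 'M[C]_n) : R :=
  sup [set vnorm2 (M *m x) | x in [set x : 'cV[C]_n | vnorm2 x = 1]].

Fixpoint blk (ss : seq nat) (i : nat) : nat :=
  match ss with
  | [::] => 0
  | s :: ss' => if (i < s)%N then 0 else (blk ss' (i - s)).+1
  end.

(* The block structure determined by the sizes ks = (k_1,..,k_r) of the
   repeated scalar blocks and ns = (n_1,..,n_s) of the full blocks:
   well-formedness (positive sizes summing to n) *)
Definition block_structure_ok n (ks ns : seq nat) : Prop :=
  all (fun k => (0 < k)%N) ks /\ all (fun k => (0 < k)%N) ns /\
  (sumn ks + sumn ns = n)%N.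

(* membership D \in B = diag(d_1 I_{k_1},..,d_r I_{k_r},Delta_1,..,Delta_s) *)
Definition in_block_structure n (ks ns : seq nat) (D : 'M[C]_n) : Prop :=
  let ss := ks ++ ns in
  forall i j : 'I_n,
    (blk ss i != blk ss j -> D i j = 0) /\
    (blk ss i = blk ss j -> (blk ss i < size ks)%N ->
       (i != j -> D i j = 0) /\ D i i = D j j).

Definition destab_set n (ks ns : seq nat) (M : 'M[C]_n) : set 'M[C]_n :=
  [set D | in_block_structure ks ns D /\ \det (1%:M + M *m D) = 0].

(* structured singular value; the minimum in the paper is attained, so it
   equals the infimum used here *)
Definition ssv n (ks ns : seq nat) (M : 'M[C]_n) : R :=
  if `[< exists D, destab_set ks ns M D >]
  then (inf [set specnorm D | D in destab_set ks ns M])^-1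
  else 0.

End Defs.

(* Main.v *)
Require Import Defs.
From HB Require Import structures.
From mathcomp Require Import all_boot all_order all_algebra.
From mathcomp Require Import boolp classical_sets reals.
From mathcomp Require Import complex.
From mathcomp Require Import ring lra.
Set Implicit Arguments. Unset Strict Implicit. Unset Printing Implicit Defensive.
Import Order.TTheory GRing.Theory Num.Theory.
Local Open Scope ring_scope.
Local Open Scope complex_scope.

Lemma cReD {R : realType} (z w : R[i]) : complex.Re (z + w) = complex.Re z + complex.Re w.
Proof. by case: z => ? ?; case: w. Qed.
Lemma cImD {R : realType} (z w : R[i]) : complex.Im (z + w) = complex.Im z + complex.Im w.
Proof. by case: z => ? ?; case: w. Qed.
Lemma cReN {R : realType} (z : R[i]) : complex.Re (- z) = - complex.Re z.
Proof. by case: z. Qed.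
Lemma cImN {R : realType} (z : R[i]) : complex.Im (- z) = - complex.Im z.
Proof. by case: z. Qed.
Lemma cReM {R : realType} (z w : R[i]) : complex.Re (z * w) = complex.Re z * complex.Re w - complex.Im z * complex.Im w.
Proof. by case: z => ? ?; case: w. Qed.
Lemma cImM {R : realType} (z w : R[i]) : complex.Im (z * w) = complex.Re z * complex.Im w + complex.Im z * complex.Re w.
Proof. by case: z => ? ?; case: w. Qed.
Lemma cReC {R : realType} (a : R) : complex.Re (a%:C) = a. Proof. by []. Qed.
Lemma cImC {R : realType} (a : R) : complex.Im (a%:C) = 0. Proof. by []. Qed.
Lemma cRe0 {R : realType} : complex.Re (0 : R[i]) = 0. Proof. by []. Qed.
Lemma cIm0 {R : realType} : complex.Im (0 : R[i]) = 0. Proof. by []. Qed.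
Lemma cRe1 {R : realType} : complex.Re (1 : R[i]) = 1. Proof. by []. Qed.
Lemma cIm1 {R : realType} : complex.Im (1 : R[i]) = 0. Proof. by []. Qed.
Lemma cReJ {R : realType} (z : R[i]) : complex.Re (z^*) = complex.Re z. Proof. by case: z. Qed.
Lemma cImJ {R : realType} (z : R[i]) : complex.Im (z^*) = - complex.Im z. Proof. by case: z. Qed.
Lemma cRe_sum {R : realType} I (r : seq I) P (F : I -> R[i]) :
  complex.Re (\sum_(i <- r | P i) F i) = \sum_(i <- r | P i) complex.Re (F i).
Proof. by apply: (big_morph _ cReD cRe0). Qed.
Lemma cIm_sum {R : realType} I (r : seq I) P (F : I -> R[i]) :
  complex.Im (\sum_(i <- r | P i) F i) = \sum_(i <- r | P i) complex.Im (F i).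
Proof. by apply: (big_morph _ cImD cIm0). Qed.
Lemma cext {R : realType} (z w : R[i]) : complex.Re z = complex.Re w -> complex.Im z = complex.Im w -> z = w.
Proof. by case: z => ? ?; case: w => ? ? /= -> ->. Qed.
Definition nsq (R : realType) n (x : 'cV[R[i]]_n) : R :=
  \sum_(i < n) (complex.Re (x i 0) ^+ 2 + complex.Im (x i 0) ^+ 2).

Lemma nsq_ge0 (R : realType) n (x : 'cV[R[i]]_n) : 0 <= nsq x.
Proof. by apply: sumr_ge0 => i _; rewrite addr_ge0 // sqr_ge0. Qed.

Lemma vnorm2E (R : realType) n (x : 'cV[R[i]]_n) : vnorm2 x = Num.sqrt (nsq x).
Proof. by []. Qed.

Lemma CS (R : realType) n (p q r s : 'I_n -> R) :
  (\sum_i (p i * q i + r i * s i)) ^+ 2 <=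
  (\sum_i (p i ^+ 2 + r i ^+ 2)) * (\sum_i (q i ^+ 2 + s i ^+ 2)).
Proof.
set X := \sum_i _; set A := \sum_i _; set B := \sum_i _.
have A0 : 0 <= A by apply: sumr_ge0 => i _; rewrite addr_ge0 // sqr_ge0.
have B0 : 0 <= B by apply: sumr_ge0 => i _; rewrite addr_ge0 // sqr_ge0.
have H : forall t, 0 <= t ^+ 2 * A - 2 * t * X + B.
  move=> t.
  have -> : t ^+ 2 * A - 2 * t * X + B =
     \sum_i ((t * p i - q i) ^+ 2 + (t * r i - s i) ^+ 2).
    rewrite /A /X /B !mulr_sumr -sumrN -!big_split /=.
    by apply: eq_bigr => i _; ring.
  by apply: sumr_ge0 => i _; rewrite addr_ge0 // sqr_ge0.
have [Ap|] := ltrP 0 A.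
  have := H (X / A).
  have -> : (X / A) ^+ 2 * A - 2 * (X / A) * X + B = B - X ^+ 2 / A.
    by field; rewrite gt_eqF.
  rewrite subr_ge0 ler_pdivrMr // => h; by rewrite mulrC.
move=> A0'; have AA : A = 0 by apply/eqP; rewrite eq_le A0' A0.
have [X0|X0] := eqVneq X 0.
  by rewrite X0 expr0n /= mulr_ge0.
have := H ((B + 1) / X); rewrite AA.
have -> : ((B + 1) / X) ^+ 2 * 0 - 2 * ((B + 1) / X) * X + B = - B - 2.
  by field.
lra.
Qed.
Definition dotR (R : realType) n (x y : 'cV[R[i]]_n) : R :=
  \sum_(i < n) (complex.Re (x i 0) * complex.Re (y i 0) + complex.Im (x i 0) * complex.Im (y i 0)).

Lemma nsqD (R : realType) n (x y : 'cV[R[i]]_n) :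
  nsq (x + y) = nsq x + nsq y + 2 * dotR x y.
Proof.
rewrite /nsq /dotR mulr_sumr -!big_split /=; apply: eq_bigr => i _.
rewrite !mxE cReD cImD; ring.
Qed.

Lemma dotR_CS (R : realType) n (x y : 'cV[R[i]]_n) : dotR x y ^+ 2 <= nsq x * nsq y.
Proof. exact: CS. Qed.

Lemma sqrt_sq (R : realType) (a : R) : 0 <= a -> Num.sqrt (a ^+ 2) = a.
Proof. by move=> a0; rewrite sqrtr_sqr ger0_norm. Qed.

Lemma vnorm2_ge0 (R : realType) n (x : 'cV[R[i]]_n) : 0 <= vnorm2 x.
Proof. exact: sqrtr_ge0. Qed.

Lemma vnorm2_triangle (R : realType) n (x y : 'cV[R[i]]_n) :
  vnorm2 (x + y) <= vnorm2 x + vnorm2 y.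
Proof.
rewrite !vnorm2E -(sqrt_sq (addr_ge0 (sqrtr_ge0 (nsq x)) (sqrtr_ge0 (nsq y)))).
rewrite ler_sqrt ?exprn_ge0 ?addr_ge0 ?sqrtr_ge0 //.
rewrite nsqD sqrrD !sqr_sqrtr ?nsq_ge0 //.
suff hh : dotR x y <= Num.sqrt (nsq x) * Num.sqrt (nsq y).
  rewrite -mulr_natr; lra.
have h := dotR_CS x y.
have [d0|d0] := lerP (dotR x y) 0.
  by apply: le_trans d0 _; rewrite mulr_ge0 ?sqrtr_ge0.
by rewrite -sqrtrM ?nsq_ge0 // -(sqrt_sq (ltW d0)) ler_sqrt // ?mulr_ge0 ?nsq_ge0.
Qed.

Lemma nsqZ (R : realType) n (c : R[i]) (x : 'cV[R[i]]_n) :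
  nsq (c *: x) = (complex.Re c ^+ 2 + complex.Im c ^+ 2) * nsq x.
Proof.
rewrite /nsq mulr_sumr; apply: eq_bigr => i _; rewrite !mxE cReM cImM; ring.
Qed.

Lemma vnorm2Z (R : realType) n (c : R[i]) (x : 'cV[R[i]]_n) :
  vnorm2 (c *: x) = Num.sqrt (complex.Re c ^+ 2 + complex.Im c ^+ 2) * vnorm2 x.
Proof. by rewrite !vnorm2E nsqZ sqrtrM // addr_ge0 ?sqr_ge0. Qed.

Lemma vnorm2ZR (R : realType) n (c : R) (x : 'cV[R[i]]_n) :
  0 <= c -> vnorm2 (c%:C *: x) = c * vnorm2 x.
Proof. by move=> c0; rewrite vnorm2Z cReC cImC expr0n /= addr0 sqrt_sq. Qed.

Lemma nsqN (R : realType) n (x : 'cV[R[i]]_n) : nsq (- x) = nsq x.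
Proof. by apply: eq_bigr => i _; rewrite !mxE cReN cImN !sqrrN. Qed.

Lemma vnorm2N (R : realType) n (x : 'cV[R[i]]_n) : vnorm2 (- x) = vnorm2 x.
Proof. by rewrite !vnorm2E nsqN. Qed.

Lemma nsq_entry (R : realType) n (x : 'cV[R[i]]_n) j :
  complex.Re (x j 0) ^+ 2 + complex.Im (x j 0) ^+ 2 <= nsq x.
Proof.
rewrite /nsq (bigD1 j) //= lerDl; apply: sumr_ge0 => i _; rewrite addr_ge0 ?sqr_ge0 //.
Qed.

Lemma nsq_eq0 (R : realType) n (x : 'cV[R[i]]_n) : nsq x = 0 -> x = 0.
Proof.
move=> h; apply/matrixP => i j; rewrite (ord1 j) mxE.
have := nsq_entry x i; rewrite h => h2.
have h3 : complex.Re (x i 0) ^+ 2 = 0 /\ complex.Im (x i 0) ^+ 2 = 0.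
  have := sqr_ge0 (complex.Re (x i 0)); have := sqr_ge0 (complex.Im (x i 0)); lra.
case: h3 => /eqP; rewrite sqrf_eq0 => /eqP a /eqP; rewrite sqrf_eq0 => /eqP b.
by apply: cext.
Qed.

Lemma vnorm2_eq0 (R : realType) n (x : 'cV[R[i]]_n) : vnorm2 x = 0 -> x = 0.
Proof. by rewrite vnorm2E => /eqP; rewrite sqrtr_eq0 => h; apply: nsq_eq0; apply/eqP; rewrite eq_le h nsq_ge0. Qed.

Lemma vnorm2_0 (R : realType) n : vnorm2 (0 : 'cV[R[i]]_n) = 0.
Proof. by rewrite vnorm2E /nsq big1 ?sqrtr0 // => i _; rewrite mxE expr0n /= addr0. Qed.

Lemma vnorm2_sum (R : realType) n m (v : 'I_m -> 'cV[R[i]]_n) :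
  vnorm2 (\sum_(j < m) v j) <= \sum_(j < m) vnorm2 (v j).
Proof.
elim/big_ind2: _ => //; first by rewrite vnorm2_0.
by move=> x1 x2 y1 y2 h1 h2; apply: le_trans (vnorm2_triangle _ _) _; apply: lerD.
Qed.

Lemma entry_le (R : realType) n (x : 'cV[R[i]]_n) j :
  Num.sqrt (complex.Re (x j 0) ^+ 2 + complex.Im (x j 0) ^+ 2) <= vnorm2 x.
Proof. by rewrite vnorm2E ler_sqrt ?nsq_ge0 ?nsq_entry. Qed.

Lemma mulmx_colsum (R : realType) n (M : 'M[R[i]]_n) (x : 'cV[R[i]]_n) :
  M *m x = \sum_(j < n) x j 0 *: col j M.
Proof.
apply/matrixP => i k; rewrite (ord1 k) !mxE summxE; apply: eq_bigr => j _.
by rewrite !mxE mulrC.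
Qed.

Lemma mx_bound (R : realType) n (M : 'M[R[i]]_n) :
  exists K, 0 <= K /\ forall x, vnorm2 (M *m x) <= K * vnorm2 x.
Proof.
exists (\sum_(j < n) vnorm2 (col j M)); split.
  by apply: sumr_ge0 => j _; apply: vnorm2_ge0.
move=> x; rewrite mulmx_colsum mulr_suml.
apply: le_trans (vnorm2_sum _) _; apply: ler_sum => j _.
rewrite vnorm2Z mulrC ler_wpM2l ?vnorm2_ge0 //; exact: entry_le.
Qed.

Definition nset (R : realType) n (M : 'M[R[i]]_n) :=
  [set vnorm2 (M *m x) | x in [set x : 'cV[R[i]]_n | vnorm2 x = 1]]%classic.

Lemma specnormE (R : realType) n (M : 'M[R[i]]_n) : specnorm M = sup (nset M).
Proof. by []. Qed.

Lemma nset_ub (R : realType) n (M : 'M[R[i]]_n) : has_ubound (nset M).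
Proof.
have [K [K0 HK]] := mx_bound M.
exists K => _ [x /= x1 <-]; by have := HK x; rewrite x1 mulr1.
Qed.

Lemma normalize (R : realType) n (x : 'cV[R[i]]_n) : x != 0 ->
  vnorm2 ((vnorm2 x)^-1%:C *: x) = 1.
Proof.
move=> x0; have p : 0 < vnorm2 x.
  rewrite lt_def vnorm2_ge0 andbT; apply/eqP => h; by move: x0; rewrite (vnorm2_eq0 h) eqxx.
by rewrite vnorm2ZR ?invr_ge0 ?ltW // mulVf // gt_eqF.
Qed.

Lemma specnorm_le (R : realType) n (M : 'M[R[i]]_n) (x : 'cV[R[i]]_n) :
  vnorm2 (M *m x) <= specnorm M * vnorm2 x.
Proof.
have [->|x0] := eqVneq x 0; first by rewrite mulmx0 vnorm2_0 mulr0.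
have p : 0 < vnorm2 x.
  rewrite lt_def vnorm2_ge0 andbT; apply/eqP => h; by move: x0; rewrite (vnorm2_eq0 h) eqxx.
have h : nset M (vnorm2 (M *m ((vnorm2 x)^-1%:C *: x))).
  by exists ((vnorm2 x)^-1%:C *: x) => //; rewrite /= normalize.
have := ub_le_sup (nset_ub M) h.
rewrite -specnormE -scalemxAr vnorm2ZR; last by rewrite invr_ge0 ltW.
by rewrite mulrC -ler_pdivlMr ?invr_gt0 // invrK.
Qed.

Lemma specnorm_eq (R : realType) n (M : 'M[R[i]]_n) (c : R) (x : 'cV[R[i]]_n) :
  (forall y, vnorm2 (M *m y) <= c * vnorm2 y) ->
  x != 0 -> vnorm2 (M *m x) = c * vnorm2 x -> specnorm M = c.
Proof.
move=> hub x0 hx.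
have p : 0 < vnorm2 x.
  rewrite lt_def vnorm2_ge0 andbT; apply/eqP => h; by move: x0; rewrite (vnorm2_eq0 h) eqxx.
have h : nset M c.
  exists ((vnorm2 x)^-1%:C *: x); first by rewrite /= normalize.
  rewrite -scalemxAr vnorm2ZR ?invr_ge0 ?ltW // hx mulrCA mulVf ?mulr1 // gt_eqF //.
apply/eqP; rewrite eq_le; apply/andP; split.
  rewrite specnormE; apply: ge_sup; first by exists c.
  by move=> _ [y /= y1 <-]; have := hub y; rewrite y1 mulr1.
by rewrite specnormE; apply: (ub_le_sup (nset_ub M) h).
Qed.

Lemma sq_bound (R : realType) n (a b : 'cV[R[i]]_n) (d : R) : 0 <= d ->
  vnorm2 a <= d * vnorm2 b -> nsq a <= d ^+ 2 * nsq b.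
Proof.
move=> d0; rewrite !vnorm2E -{1}(sqrt_sq d0) -sqrtrM ?sqr_ge0 // ler_sqrt //.
by rewrite mulr_ge0 ?sqr_ge0 ?nsq_ge0.
Qed.

Lemma allconst (R : realType) n (v : 'I_n -> R[i]) (d : R) :
  \sum_i v i = (d *+ n)%:C ->
  \sum_i (complex.Re (v i) ^+ 2 + complex.Im (v i) ^+ 2) <= d ^+ 2 *+ n ->
  forall i, v i = d%:C.
Proof.
move=> hs hn.
pose w : 'cV[R[i]]_n := \col_i (v i - d%:C).
have hw : nsq w = \sum_i (complex.Re (v i) ^+ 2 + complex.Im (v i) ^+ 2)
              - 2 * d * \sum_i complex.Re (v i) + d ^+ 2 *+ n.
  have -> : d ^+ 2 *+ n = \sum_(i < n) d ^+ 2 by rewrite sumr_const card_ord.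
  rewrite mulr_sumr -sumrB -big_split /=.
  apply: eq_bigr => i _; by rewrite /w !mxE cReD cImD cReN cImN cReC cImC; ring.
have hre : \sum_i complex.Re (v i) = d *+ n by rewrite -cRe_sum hs.
have w0 : nsq w = 0.
  apply/eqP; rewrite eq_le nsq_ge0 andbT hw hre.
 rewrite (_ : 2 * d * (d *+ n) = d ^+ 2 *+ n + d ^+ 2 *+ n); last first.
   by ring.
 move: hn; generalize (d ^+ 2 *+ n) => A.
 generalize (\sum_i (complex.Re (v i) ^+ 2 + complex.Im (v i) ^+ 2)) => N.
lra.
move=> i; have := congr1 (fun m : 'cV[R[i]]_n => m i 0) (nsq_eq0 w0).
by rewrite !mxE => /eqP; rewrite subr_eq0 => /eqP.
Qed.

Lemma row_to_col (R : realType) n (M : 'M[R[i]]_n) (d : R) : 0 <= d ->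
  (forall y, vnorm2 (M *m y) <= d * vnorm2 y) ->
  gen_row_stoch d%:C M -> gen_col_stoch d%:C M.
Proof.
move=> d0 hb hr.
pose c := fun j : 'I_n => \sum_i M i j.
have hsum : \sum_j c j = (d *+ n)%:C.
  rewrite /c exchange_big /=.
  under eq_bigr do rewrite hr.
  by rewrite sumr_const card_ord raddfMn.
move=> j; apply: (allconst hsum) => //.
pose x : 'cV[R[i]]_n := \col_j (c j)^*.
set N := \sum_i _.
have hNx : nsq x = N.
  by apply: eq_bigr => i _; rewrite /x mxE cReJ cImJ sqrrN.
have hN : \sum_i complex.Re ((M *m x) i 0) = N.
  rewrite -cRe_sum.
  under eq_bigr do rewrite mxE.
  rewrite exchange_big /=.
  under eq_bigr do under eq_bigr do rewrite /x mxE.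
  under eq_bigr do rewrite -mulr_suml.
  rewrite cRe_sum; apply: eq_bigr => i _; rewrite cReM cReJ cImJ; ring.
have h1 : N ^+ 2 <= nsq (M *m x) * n%:R.
  have := CS (fun i => complex.Re ((M *m x) i 0)) (fun=> 1) (fun=> 0) (fun=> 0).
  under eq_bigr do rewrite mulr1 mul0r addr0.
  under [X in _ <= _ * X -> _]eq_bigr do rewrite expr1n expr0n /= addr0.
  rewrite hN sumr_const card_ord => h; apply: le_trans h _.
  apply: ler_wpM2r; first by rewrite ler0n.
  apply: ler_sum => i _; rewrite expr0n /= addr0 lerDl sqr_ge0 //.
have h2 : nsq (M *m x) <= d ^+ 2 * N by rewrite -hNx; apply: sq_bound.
have N0 : 0 <= N by rewrite -hNx nsq_ge0.
have h3 : N * N <= (d ^+ 2 *+ n) * N.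
  rewrite -expr2; apply: le_trans h1 _.
  apply: (le_trans (ler_wpM2r (ler0n _ n) h2)); by rewrite mulr_natr mulrnAl.
have [->|Np] := eqVneq N 0; first by rewrite mulrn_wge0 // sqr_ge0.
have Npos : 0 < N by rewrite lt_def Np N0.
by rewrite -(ler_pM2r Npos).
Qed.

Lemma nsq_const1 (R : realType) n : nsq (const_mx 1 : 'cV[R[i]]_n) = n%:R.
Proof.
rewrite /nsq (eq_bigr (fun=> 1)) ?sumr_const ?card_ord //.
by move=> i _; rewrite mxE cRe1 cIm1 expr1n expr0n /= addr0.
Qed.

Lemma col_to_row (R : realType) n (M : 'M[R[i]]_n) (d : R) : 0 <= d ->
  (forall y, vnorm2 (M *m y) <= d * vnorm2 y) ->
  gen_col_stoch d%:C M -> gen_row_stoch d%:C M.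
Proof.
move=> d0 hb hc.
pose e : 'cV[R[i]]_n := const_mx 1.
pose v := fun i => (M *m e) i 0.
have hv : forall i, v i = \sum_j M i j.
  by move=> i; rewrite /v mxE; apply: eq_bigr => j _; rewrite mxE mulr1.
have hsum : \sum_i v i = (d *+ n)%:C.
  under eq_bigr do rewrite hv.
  rewrite exchange_big /=.
  under eq_bigr do rewrite hc.
  by rewrite sumr_const card_ord raddfMn.
move=> i; rewrite -hv; apply: (allconst hsum).
have := sq_bound d0 (hb e); rewrite nsq_const1 mulr_natr.
by [].
Qed.

Lemma det_ker (R : realType) n (A : 'M[R[i]]_n) : \det A = 0 ->
  exists x : 'cV[R[i]]_n, x != 0 /\ A *m x = 0.
Proof.
move=> h; have : \det A^T == 0 by rewrite det_tr h.
case/det0P => v v0 hv; exists v^T; split.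
  by apply: contra v0 => /eqP h2; apply/eqP; rewrite -(trmxK v) h2 trmx0.
by apply: trmx_inj; rewrite trmx_mul trmxK hv trmx0.
Qed.

Lemma ker_det (R : realType) n (A : 'M[R[i]]_n) (x : 'cV[R[i]]_n) :
  x != 0 -> A *m x = 0 -> \det A = 0.
Proof.
move=> x0 hx; apply/eqP; apply: contraR x0 => hd.
have hu : A \in unitmx by rewrite unitmxE unitfE.
by rewrite -(mulKmx hu x) hx mulmx0.
Qed.

Unset Implicit Arguments.
Theorem corollary2p6 (R : realType) (n k : nat) (hn : (0 < n)%N) (hk : (0 < k)%N)
    (delta : 'I_k -> R) (Dt : 'I_k -> 'M[R[i]]_n)
    (hpos : forall i, 0 < delta i)
    (hstoch : forall i, gen_row_stoch (delta i)%:C (Dt i) \/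
                        gen_col_stoch (delta i)%:C (Dt i))
    (hnorm : forall i, specnorm (Dt i) = delta i) :
  let S := \sum_(i < k) Dt i in
  let d := \sum_(i < k) delta i in
  gen_doubly_stoch d%:C S /\ specnorm S = d /\
  forall (m : nat) (ks ns : seq nat), block_structure_ok n ks ns ->
    ssv ks ns (S ^+ m) = d ^+ m.
Proof.
move=> S d.
pose e : 'cV[R[i]]_n := const_mx 1.
have e0 : e != 0.
  apply/eqP => /matrixP /(_ (Ordinal hn) 0); rewrite !mxE => /eqP; by rewrite oner_eq0.
have dpos : 0 < d.
  rewrite /d (bigD1 (Ordinal hk)) //=.
  have h1 := hpos (Ordinal hk).
  have h2 : 0 <= \sum_(i < k | i != Ordinal hk) delta i.
    by apply: sumr_ge0 => i _; apply: ltW.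
  by apply: lt_le_trans h1 _; rewrite lerDl.
have hb i : forall y, vnorm2 (Dt i *m y) <= delta i * vnorm2 y.
  by move=> y; rewrite -hnorm; apply: specnorm_le.
have hds i : gen_row_stoch (delta i)%:C (Dt i) /\ gen_col_stoch (delta i)%:C (Dt i).
  have d0 := ltW (hpos i).
  case: (hstoch i) => h; split => //.
    exact: row_to_col d0 (hb i) h.
  exact: col_to_row d0 (hb i) h.
have hbS : forall y, vnorm2 (S *m y) <= d * vnorm2 y.
  move=> y; rewrite /S mulmx_suml; apply: le_trans (vnorm2_sum _) _.
  by rewrite /d mulr_suml; apply: ler_sum => i _; apply: hb.
have hrowS : gen_row_stoch d%:C S.
  move=> i; rewrite /S.
  under eq_bigr do rewrite summxE.
  rewrite exchange_big /=.
  under eq_bigr do rewrite (proj1 (hds _)).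
  by rewrite /d raddf_sum.
have hcolS : gen_col_stoch d%:C S.
  move=> j; rewrite /S.
  under eq_bigr do rewrite summxE.
  rewrite exchange_big /=.
  under eq_bigr do rewrite (proj2 (hds _)).
  by rewrite /d raddf_sum.
have hSe : S *m e = d%:C *: e.
  apply/matrixP => i j; rewrite !mxE -(hrowS i).
  by rewrite mulr1; apply: eq_bigr => l _; rewrite !mxE mulr1.
have hnormS : specnorm S = d.
  by apply: (specnorm_eq hbS e0); rewrite hSe vnorm2ZR // ltW.
split; first by split.
split; first exact: hnormS.
move=> m ks ns _.
have hSm : S ^+ m *m e = (d ^+ m)%:C *: e.
  elim: m => [|m IH]; first by rewrite expr0 mul1mx expr0 scale1r.
  by rewrite exprS -mulmxE -mulmxA IH -scalemxAr hSe scalerA exprSr rmorphM.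
have hbSm : forall y, vnorm2 (S ^+ m *m y) <= d ^+ m * vnorm2 y.
  elim: m {hSm} => [|m IH] y; first by rewrite expr0 mul1mx expr0 mul1r.
  rewrite exprS -mulmxE -mulmxA; apply: le_trans (hbS _) _.
  by rewrite exprS -mulrA ler_wpM2l ?(ltW dpos).
have dm0 : 0 < d ^+ m by rewrite exprn_gt0.
pose c := (d ^+ m)^-1.
have c0 : 0 < c by rewrite invr_gt0.
pose D0 : 'M[R[i]]_n := (- c%:C)%:M.
have hD0y : forall y : 'cV[R[i]]_n, D0 *m y = - (c%:C *: y).
  by move=> y; rewrite /D0 mul_scalar_mx scaleNr.
have hD0 : destab_set ks ns (S ^+ m) D0.
  split.
    move=> i j; rewrite /D0 !mxE; split.
      move=> hne; have -> : (i == j) = false.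
        by apply/negbTE; apply: contra hne => /eqP ->.
      by rewrite mulr0n.
    by move=> _ _; split; [move=> /negbTE -> ; rewrite mulr0n | rewrite !eqxx].
  apply: (ker_det e0).
  rewrite mulmxDl mul1mx -mulmxA hD0y mulmxN -scalemxAr hSm scalerA -rmorphM.
  by rewrite /c mulVf ?gt_eqF // scale1r subrr.
have spD0 : specnorm D0 = c.
  have hh : forall y, vnorm2 (D0 *m y) = c * vnorm2 y.
    by move=> y; rewrite hD0y vnorm2N vnorm2ZR // ltW.
  by apply: (specnorm_eq _ e0 (hh e)) => y; rewrite hh.
have lbd : forall D, destab_set ks ns (S ^+ m) D -> c <= specnorm D.
  move=> D [_ hdet]; have [x [x0 hx]] := det_ker hdet.
  have hx2 : x = - (S ^+ m *m (D *m x)).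
    apply/eqP; rewrite -addr_eq0 mulmxA -{1}(mul1mx x) -mulmxDl hx //.
  have px : 0 < vnorm2 x.
    rewrite lt_def vnorm2_ge0 andbT; apply/eqP => h; by move: x0; rewrite (vnorm2_eq0 h) eqxx.
  have : vnorm2 x <= d ^+ m * (specnorm D * vnorm2 x).
    rewrite {1}hx2 vnorm2N; apply: le_trans (hbSm _) _.
    by apply: ler_wpM2l; [exact: ltW | exact: specnorm_le].
  rewrite mulrA -{1}(mul1r (vnorm2 x)) ler_pM2r // => h.
  by rewrite /c -[(d ^+ m)^-1]mulr1 ler_pdivrMl.
rewrite /ssv asboolT; last by exists D0.
set E := image _ _.
have hinf : inf E = c.
  apply/eqP; rewrite eq_le; apply/andP; split.
    have hl : has_lbound E by exists c => _ [D hD <-]; apply: lbd.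
    by apply: (ge_inf hl); exists D0.
  apply: lb_le_inf; first by exists c, D0.
  by move=> _ [D hD <-]; apply: lbd.
by rewrite hinf /c invrK.
Qed.
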